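(* Let $X$ and $Y$ be finite $T_0$-spaces. If $X$ and $Y$ are simple homotopy equivalent, then $|\det(X_M)|=|\det(Y_M)|$.
   Context: A finite $T_0$-space is identified with a finite poset via $x\le y$ iff $U_x\subseteq U_y$, where $U_x$ is the minimal open set containing $x$. For a labelling $X=\{x_1,\dots,x_n\}$, $X_M=(x_{i,j})$ is the $n\times n$ matrix with $x_{i,j}=0$ if $x_i\le x_j$ and $x_{i,j}=1$ otherwise. A point $x$ is a weak beat point if $\{y:y<x\}$ is contractible or $\{y:y>x\}$ is contractible. Two finite $T_0$-spaces are simple homotopy equivalent if one can be obtained from the other (up to homeomorphism) by a finite sequence of adding and removing weak beat points one at a time. *)

(* Defs.v *)
From Stdlib Require Import Reals Relations.
From mathcomp Require Import all_boot all_order all_algebra.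
Set Implicit Arguments. Unset Strict Implicit. Unset Printing Implicit Defensive.
Import GRing.Theory Num.Theory.

(* A finite T0-space, identified with the finite poset (X, <=) where
   x <= y iff U_x \subseteq U_y.  Its minimal open sets are U_x = {y | y <= x}
   and its open sets are the down-sets. *)
Record FinT0 := {
  pt :> finType;
  ple : rel pt;
  ple_refl : reflexive ple;
  ple_anti : antisymmetric ple;
  ple_trans : transitive ple
}.

Definition plt (X : FinT0) (x y : X) : bool := (x != y) && ple x y.

(* Contractibility of the subspace A of the finite T0-space X:
   A is nonempty and the identity of A is homotopic to a constant map,
   i.e. there is a continuous H : A x [0,1] -> A with H(-,0) = id and
   H(-,1) = const c.  Continuity is written out: the preimage of every
   basic open set U_a \cap A (a \in A) is open in the product A x [0,1],
   whose basic open sets are (U_y \cap A) x (ball \cap [0,1]). *)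
Definition contractible (X : FinT0) (A : {set X}) : Prop :=
  exists c : X, c \in A /\
  exists H : X -> R -> X,
    (forall x t, x \in A -> Rle R0 t -> Rle t R1 -> H x t \in A) /\
    (forall x, x \in A -> H x R0 = x) /\
    (forall x, x \in A -> H x R1 = c) /\
    (forall a x t, a \in A -> x \in A -> Rle R0 t -> Rle t R1 ->
        ple (H x t) a ->
        exists eps : R, Rlt R0 eps /\
          forall y s, y \in A -> ple y x -> Rle R0 s -> Rle s R1 ->
            Rlt (Rabs (Rminus s t)) eps -> ple (H y s) a).

Definition weak_beat_point (X : FinT0) (x : X) : Prop :=
  contractible [set y | plt y x] \/ contractible [set y | plt x y].

(* Homeomorphism of finite T0-spaces = order isomorphism. *)
Definition homeomorphic (X Y : FinT0) : Prop :=
  exists f : X -> Y, bijective f /\ forall a b, ple (f a) (f b) = ple a b.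

Definition wbp_removal (X Y : FinT0) : Prop :=
  exists x : X, weak_beat_point x /\
  exists f : Y -> X, injective f /\
    (forall z : X, z != x <-> exists y, f y = z) /\
    forall a b, ple (f a) (f b) = ple a b.

Definition she_step (X Y : FinT0) : Prop := homeomorphic X Y \/ wbp_removal X Y.

Definition simple_homotopy_equivalent (X Y : FinT0) : Prop :=
  clos_refl_sym_trans FinT0 she_step X Y.

Definition XM (X : FinT0) (n : nat) (f : 'I_n -> X) : 'M[int]_n :=
  \matrix_(i, j) (if ple (f i) (f j) then 0%R else 1%R).

(* Main.v *)
Require Import Defs.
From Stdlib Require Import Reals Relations Classical Lra.
From mathcomp Require Import all_boot all_order all_algebra.
Import GRing.Theory Num.Theory.
Local Open Scope ring_scope.
Set Implicit Arguments. Unset Strict Implicit.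

Section Real.
Local Open Scope R_scope.

Lemma interval_chain (T : Type) (rel : T -> T -> Prop) (F : R -> T) :
  (forall t, 0 <= t -> t <= 1 -> exists e, 0 < e /\
     forall s, 0 <= s -> s <= 1 -> Rabs (s - t) < e -> rel (F s) (F t)) ->
  clos_refl_sym_trans T rel (F R0) (F R1).
Proof.
move=> loc.
pose E := fun t => 0 <= t <= 1 /\ forall s, 0 <= s <= t -> clos_refl_sym_trans T rel (F 0) (F s).
have bnd : bound E by exists 1 => t [[_ ?] _].
have E0 : E 0.
  split; first lra.
  move=> s Hs; have -> : s = 0 by lra.
  exact: rst_refl.
have [Tm [ub lub]] := completeness E bnd (ex_intro _ 0 E0).
have T0 : 0 <= Tm by apply: ub.
have T1 : Tm <= 1 by apply: lub => t [[_ ?] _].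
have [e [e0 He]] := loc Tm T0 T1.
have [t0 [Et0 t0e]] : exists t0, E t0 /\ Tm - e < t0.
  apply: NNPP => nE.
  have : Tm <= Tm - e.
    apply: lub => t Et; apply: Rnot_lt_le => lt; apply: nE; by exists t.
  lra.
have t0T : t0 <= Tm by apply: ub.
have [[t00 t01] Ht0] := Et0.
have cT : clos_refl_sym_trans T rel (F 0) (F Tm).
  apply: rst_trans (Ht0 t0 _) _; first lra.
  apply: rst_step; apply: He => //; apply: Rabs_def1; lra.
have near s : 0 <= s -> s <= 1 -> Rabs (s - Tm) < e -> clos_refl_sym_trans T rel (F 0) (F s).
  move=> s0 s1 hs; apply: rst_trans cT _; apply: rst_sym; apply: rst_step; exact: He.
case: (Rlt_or_le (1 - Tm) e) => h1.
  apply: near; try lra; apply: Rabs_def1; lra.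
have : E (Tm + e / 2).
  split; first lra.
  move=> s [s0 s1].
  case: (Rle_or_lt s t0) => hs; first by apply: Ht0; lra.
  apply: near; try lra; apply: Rabs_def1; lra.
move/ub; lra.
Qed.

Lemma fin_eps (X : eqType) (t : R) (P : X -> R -> Prop) (l : seq X) :
  (forall x, x \in l -> exists e, 0 < e /\ forall s, Rabs (s - t) < e -> P x s) ->
  exists e, 0 < e /\ forall x, x \in l -> forall s, Rabs (s - t) < e -> P x s.
Proof.
elim: l => [|x l IH] H.
  by exists 1; split; [lra | move=> x].
have [e1 [e10 H1]] := H x (mem_head x l).
have [e2 [e20 H2]] : exists e, 0 < e /\ forall y, y \in l -> forall s, Rabs (s - t) < e -> P y s.
  by apply: IH => y hy; apply: H; rewrite in_cons hy orbT.
exists (Rmin e1 e2); split; first by apply: Rmin_glb_lt.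
move=> y; rewrite in_cons => /orP[/eqP->|hy] s hs.
  apply: H1; apply: Rlt_le_trans hs (Rmin_l _ _).
apply: H2 => //; apply: Rlt_le_trans hs (Rmin_r _ _).
Qed.

End Real.

Section Psi.
Variable X : FinT0.

Definition chain (S : {set X}) : bool :=
  [forall a in S, forall b in S, ple a b || ple b a].
Definition psi (A : {set X}) : int :=
  \sum_(S : {set X} | (S \subset A) && chain S) (-1) ^+ #|S|.

Lemma chainP (S : {set X}) :
  reflect (forall a b, a \in S -> b \in S -> ple a b || ple b a) (chain S).
Proof.
apply: (iffP forall_inP) => H.
  by move=> a b aS bS; exact: (forall_inP (H a aS) b bS).
by move=> a aS; apply/forall_inP => b bS; exact: H.
Qed.

Lemma chain_sub (S T : {set X}) : S \subset T -> chain T -> chain S.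
Proof.
move=> /subsetP ST /chainP H; apply/chainP => a b aS bS; apply: H; exact: ST.
Qed.

Lemma plt_anti (a b : X) : plt a b -> plt b a -> False.
Proof.
rewrite /plt => /andP[ne ab] /andP[_ ba].
by move: ne; rewrite (@ple_anti X a b) ?ab ?ba ?eqxx.
Qed.

Lemma psi0 : psi set0 = 1.
Proof.
rewrite /psi (big_pred1 set0) ?cards0 ?expr0 // => S /=.
rewrite subset0; case: eqP => // ->.
by apply/chainP => a b; rewrite inE.
Qed.

Lemma plt_irr (a : X) : plt a a = false.
Proof. by rewrite /plt eqxx. Qed.

Lemma plt_ple (a b : X) : plt a b -> ple a b.
Proof. by case/andP. Qed.

Lemma ple_plt (a b : X) : ple a b -> a != b -> plt a b.
Proof. by move=> ab ne; rewrite /plt ne ab. Qed.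

Lemma split_inv (A : {set X}) x (p : {set X} * {set X}) :
  x \in A ->
  p.1 \subset [set y in A | plt y x] -> p.2 \subset [set y in A | plt x y] ->
  ((p.1 :|: (x |: p.2)) :&: [set y in A | plt y x],
   (p.1 :|: (x |: p.2)) :&: [set y in A | plt x y]) = p.
Proof.
case: p => S1 S2 /= xA /subsetP s1 /subsetP s2.
congr pair; apply/setP => y; rewrite !inE.
  case yS1: (y \in S1); first by have := s1 _ yS1; rewrite inE => /andP[-> ->].
  case: eqP => [->|_]; first by rewrite plt_irr !andbF.
  case yS2: (y \in S2) => //=.
  have := s2 _ yS2; rewrite inE => /andP[_ xy].
  by case: (y \in A) => //=; apply/negP => yx; exact: (plt_anti xy yx).
case yS2: (y \in S2).
  by have := s2 _ yS2; rewrite inE => /andP[H1 H2]; rewrite H1 H2 !orbT.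
case: eqP => [->|_]; first by rewrite plt_irr !andbF.
case yS1: (y \in S1) => //=.
have := s1 _ yS1; rewrite inE => /andP[_ yx].
by case: (y \in A) => //=; apply/negP => xy; exact: (plt_anti xy yx).
Qed.

Lemma split_chain (A : {set X}) x (S1 S2 : {set X}) :
  S1 \subset [set y in A | plt y x] -> S2 \subset [set y in A | plt x y] ->
  chain S1 -> chain S2 -> chain (S1 :|: (x |: S2)).
Proof.
move=> /subsetP s1 /subsetP s2 /chainP c1 /chainP c2; apply/chainP => a b.
have lx z : z \in S1 -> ple z x.
  by move=> /s1; rewrite inE => /andP[_ /plt_ple].
have xu z : z \in S2 -> ple x z.
  by move=> /s2; rewrite inE => /andP[_ /plt_ple].
rewrite !inE => /or3P[aS|/eqP->|aS] /or3P[bS|/eqP->|bS].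
- exact: c1.
- by rewrite lx.
- by rewrite (ple_trans (lx _ aS) (xu _ bS)).
- by rewrite lx ?orbT.
- by rewrite ple_refl.
- by rewrite xu.
- by rewrite (ple_trans (lx _ bS) (xu _ aS)) orbT.
- by rewrite xu ?orbT.
- exact: c2.
Qed.

Lemma split_card (A : {set X}) x (S1 S2 : {set X}) :
  S1 \subset [set y in A | plt y x] -> S2 \subset [set y in A | plt x y] ->
  #|S1 :|: (x |: S2)| = (#|S1| + (#|S2|).+1)%N.
Proof.
move=> /subsetP s1 /subsetP s2.
rewrite cardsU cardsU1.
have -> : S1 :&: (x |: S2) = set0.
  apply/setP => y; rewrite !inE; case yS1: (y \in S1) => //=.
  have := s1 _ yS1; rewrite inE => /andP[_ yx].
  case: eqP => [eyx|_]; first by move: yx; rewrite eyx plt_irr.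
  apply/negP => /s2; rewrite inE => /andP[_ xy]; exact: (plt_anti xy yx).
have -> : x \notin S2 by apply/negP => /s2; rewrite inE plt_irr andbF.
by rewrite cards0 subn0 add1n.
Qed.

Lemma psi_split (A : {set X}) x : x \in A ->
  psi A = psi (A :\ x) - psi [set y in A | plt y x] * psi [set y in A | plt x y].
Proof.
move=> xA.
set L := [set y in A | plt y x]; set U := [set y in A | plt x y].
rewrite {1}/psi (bigID (fun S : {set X} => x \in S)) /= addrC.
congr (_ + _).
  by apply: eq_bigl => S; rewrite subsetD1 andbAC.
rewrite -[LHS]opprK -sumrN; congr (- _).
rewrite /psi mulr_suml.
under [RHS]eq_bigr do rewrite mulr_sumr.
rewrite pair_big /=.
pose h (p : {set X} * {set X}) := p.1 :|: (x |: p.2).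
pose h' (S : {set X}) := (S :&: L, S :&: U).
rewrite (reindex_onto h h').
  apply: eq_big => p.
    apply/idP/idP.
      move=> /andP[/andP[/andP[hA ch] _] /eqP E].
      have s1 : p.1 \subset h p by apply/subsetP => y yp; rewrite /h !inE yp.
      have s2 : p.2 \subset h p by apply/subsetP => y yp; rewrite /h !inE yp !orbT.
      by rewrite (chain_sub s1 ch) (chain_sub s2 ch) !andbT -[p]E /h' /= !subsetIr.
    case/and3P => /andP[s1 c1] s2 c2.
    rewrite /h' /h split_inv // eqxx andbT !inE eqxx orbT andbT.
    rewrite (split_chain s1 s2 c1 c2) andbT.
    apply/subsetP => y; rewrite !inE => /or3P[/(subsetP s1)|/eqP->//|/(subsetP s2)];
      by rewrite inE => /andP[].
  move=> /andP[_ /eqP E].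
  have s1 : (h' (h p)).1 \subset L by rewrite subsetIr.
  have s2 : (h' (h p)).2 \subset U by rewrite subsetIr.
  rewrite E in s1 s2.
  rewrite /h (split_card s1 s2).
  by rewrite exprD exprS mulN1r mulrN opprK.
move=> S /andP[/andP[SA /chainP ch] xS].
apply/setP => y; rewrite /h /h' /= !inE.
case: (eqVneq y x) => [->|yx]; first by rewrite xS !orbT.
have := ch y x.
case yS: (y \in S) => //=.
rewrite (subsetP SA y yS) /= => /(_ isT xS) /orP[yx'|xy'].
  by rewrite (ple_plt yx' yx).
by rewrite (ple_plt xy') ?orbT // eq_sym.
Qed.

Lemma psi_max (B : {set X}) m : m \in B -> (forall y, y \in B -> ple y m) -> psi B = 0.
Proof.
move=> mB Hm; rewrite (psi_split mB).
have -> : [set y in B | plt y m] = B :\ m.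
  apply/setP => y; rewrite !inE andbC /plt.
  by case yB: (y \in B); rewrite ?andbF // Hm // andbT.
have -> : [set y in B | plt m y] = set0.
  apply/setP => y; rewrite !inE; case yB: (y \in B) => //=.
  apply/negP => my; apply: (plt_anti my); rewrite /plt eq_sym (andP my).1 Hm //.
by rewrite psi0 mulr1 subrr.
Qed.

Lemma psi_min (B : {set X}) m : m \in B -> (forall y, y \in B -> ple m y) -> psi B = 0.
Proof.
move=> mB Hm; rewrite (psi_split mB).
have -> : [set y in B | plt m y] = B :\ m.
  apply/setP => y; rewrite !inE andbC /plt eq_sym.
  by case yB: (y \in B); rewrite ?andbF // Hm // andbT.
have -> : [set y in B | plt y m] = set0.
  apply/setP => y; rewrite !inE; case yB: (y \in B) => //=.
  apply/negP => my; apply: (plt_anti my); rewrite /plt eq_sym (andP my).1 Hm //.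
by rewrite psi0 mul1r subrr.
Qed.

Lemma psi1 (c : X) : psi [set c] = 0.
Proof. by apply: (psi_max (set11 c)) => y; rewrite inE => /eqP ->; exact: ple_refl. Qed.

Definition Zm n (f : 'I_n -> X) : 'M[int]_n :=
  \matrix_(i, j) (if ple (f i) (f j) then 1 else 0).
Definition img n (f : 'I_n -> X) : {set X} := [set y | [exists i, f i == y]].
Definition cmat n (f : 'I_n -> X) k : 'M[int]_n :=
  \matrix_(i, j) (if i == k then 1 else Zm f i j).

Lemma L1 n (A : 'M[int]_n.+1) k :
  (forall j, A k j = (k == j)%:R) -> \det A = \det (row' k (col' k A)).
Proof.
move=> Ak; rewrite (expand_det_row _ k) (bigD1 k) //= big1 ?addr0.
  by rewrite Ak eqxx mul1r /cofactor -signr_odd oddD addbb expr0 mul1r.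
by move=> j /negbTE; rewrite Ak eq_sym => ->; rewrite mul0r.
Qed.

Lemma rowop n (M : 'M[int]_n.+1) k (a : 'I_n.+1 -> int) : a k = 0 ->
  \det (\matrix_(i, j) (M i j + a i * M k j)) = \det M.
Proof.
move=> ak.
pose E : 'M[int]_n.+1 := \matrix_(i, j) ((i == j)%:R + (j == k)%:R * a i).
have -> : \matrix_(i, j) (M i j + a i * M k j) = E *m M.
  apply/matrixP => i j; rewrite !mxE.
  under eq_bigr do rewrite mxE mulrDl.
  rewrite big_split /= (bigD1 i) //= big1 => [|l /negbTE li]; last by rewrite eq_sym li mul0r.
  rewrite eqxx mul1r addr0 (bigD1 k) //= big1 => [|l /negbTE lk]; last by rewrite lk !mul0r.
  by rewrite eqxx mul1r addr0.
rewrite det_mulmx.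
have -> : \det E = 1.
  rewrite (@L1 _ _ k) => [|j]; last by rewrite mxE ak mulr0 addr0.
  have -> : row' k (col' k E) = 1%:M.
    apply/matrixP => i j; rewrite !mxE (inj_eq (@lift_inj _ k)).
    by rewrite [lift k j == k]eq_sym (negbTE (neq_lift k j)) mul0r addr0.
  by rewrite det1.
by rewrite mul1r.
Qed.

Lemma colop n (M : 'M[int]_n.+1) k (a : 'I_n.+1 -> int) : a k = 0 ->
  \det (\matrix_(i, j) (M i j + a j * M i k)) = \det M.
Proof.
move=> ak; rewrite -det_tr -[in RHS]det_tr -(rowop (M^T) ak); congr (\det _).
by apply/matrixP => i j; rewrite !mxE.
Qed.

Lemma exists_max n (f : 'I_n -> X) (inj : injective f) j0 :
  exists y, ple (f j0) (f y) /\ forall j, ple (f y) (f j) -> j = y.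
Proof.
case: (@arg_minnP _ j0 (fun y => ple (f j0) (f y))
         (fun y => #|[set j | ple (f y) (f j)]|) (ple_refl _)) => y Py miny.
exists y; split => // j yj.
case: (eqVneq j y) => // ne; exfalso.
have: [set z | ple (f j) (f z)] \proper [set z | ple (f y) (f z)].
  apply/properP; split.
    by apply/subsetP => z; rewrite !inE => /(ple_trans yj).
  exists y; rewrite !inE ?ple_refl //; apply/negP => jy.
  by move: ne; rewrite (inj _ _ (@ple_anti X (f j) (f y) _)) ?eqxx // jy yj.
move/proper_card; rewrite ltnNge (miny j) //.
exact: ple_trans Py yj.
Qed.

Lemma img_lift n (f : 'I_n.+1 -> X) (inj : injective f) k :
  img (f \o lift k) = img f :\ f k.
Proof.
apply/setP => z; rewrite !inE; apply/existsP/andP.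
  case=> i /eqP <-; split; first by rewrite (inj_eq inj) [lift k i == k]eq_sym neq_lift.
  by apply/existsP; exists (lift k i).
case=> nz /existsP[i /eqP fi].
have ik : k != i by apply: contraNneq nz => ->; rewrite fi.
by case: (unlift_some ik) => i' ei _; exists i'; rewrite /= -ei fi.
Qed.

Lemma det_main n : forall f : 'I_n -> X, injective f ->
  \det (Zm f - const_mx 1) = psi (img f) /\
  forall k, \det (cmat f k) = psi [set y in img f | plt y (f k)].
Proof.
elim: n => [|n IH] f inj.
  split; last by case.
  rewrite det_mx00.
  have -> : img f = set0 by apply/setP => z; rewrite !inE; apply/existsP; case; case.
  by rewrite psi0.
have imgf i : f i \in img f by rewrite inE; apply/existsP; exists i.
have cpart : forall k, \det (cmat f k) = psi [set y in img f | plt y (f k)].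
  move=> k.
  case: (classic (exists j, ~~ ple (f j) (f k))) => [[j nj]|allle].
    have [y [jy ymax]] := exists_max inj j.
    have yk : y != k by apply: contraNneq nj => <-.
    rewrite (@L1 _ _ y) => [|j']; last first.
      rewrite !mxE (negbTE yk).
      case: (boolP (ple (f y) (f j'))) => [/ymax ->|nyj]; first by rewrite eqxx.
      by case: eqP nyj => // <-; rewrite ple_refl.
    case: (unlift_some yk) => k' kE _.
    have -> : row' y (col' y (cmat f k)) = cmat (f \o lift y) k'.
      by apply/matrixP => i j'; rewrite !mxE kE (inj_eq (@lift_inj _ y)).
    rewrite (proj2 (IH _ (inj_comp inj (@lift_inj _ y))) k') img_lift // /= -kE.
    congr psi; apply/setP => z; rewrite !inE.
    case: (eqVneq z (f y)) => [->|] //=.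
    apply/esym/negP => /andP[_ /plt_ple /ymax ek].
    by move: yk; rewrite ek eqxx.
  have le j : ple (f j) (f k).
    by case: (boolP (ple (f j) (f k))) => // nj; exfalso; apply: allle; exists j.
  rewrite -(@colop _ (cmat f k) k (fun j => if j == k then 0 else -1)) ?eqxx //.
  rewrite (@L1 _ _ k) => [|j]; last first.
    rewrite !mxE !eqxx; case: (eqVneq j k) => [ejk|jk]; first by rewrite mul0r addr0.
    by rewrite mulN1r subrr.
  have -> : row' k (col' k (\matrix_(i, j) (cmat f k i j +
        (if j == k then 0 else -1) * cmat f k i k))) = Zm (f \o lift k) - const_mx 1.
    apply/matrixP => i j; rewrite !mxE [lift k i == k]eq_sym (negbTE (neq_lift k i)).
    by rewrite [lift k j == k]eq_sym (negbTE (neq_lift k j)) le mulN1r.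
  rewrite (proj1 (IH _ (inj_comp inj (@lift_inj _ k)))) img_lift //.
  congr psi; apply/setP => z; rewrite !inE /plt.
  case: (boolP [exists i, f i == z]) => [/existsP[i /eqP <-]|]; last by rewrite !andbF.
  by rewrite le !andbT.
split => //.
have [y [_ ymax]] := exists_max inj ord0.
have yrow j : ple (f y) (f j) = (y == j).
  case: (boolP (ple (f y) (f j))) => [/ymax ->|nyj]; first by rewrite eqxx.
  by case: eqP nyj => // <-; rewrite ple_refl.
pose A := Zm f - const_mx 1.
rewrite (@determinant_multilinear _ _ A
   (\matrix_(i, j) (if i == y then (y == j)%:R else A i j))
   (\matrix_(i, j) (if i == y then 1 else A i j)) y 1 (-1)); first last.
- by apply/matrixP => i j; rewrite !mxE eq_sym (negbTE (neq_lift y i)).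
- by apply/matrixP => i j; rewrite !mxE eq_sym (negbTE (neq_lift y i)).
- apply/rowP => j; rewrite !mxE eqxx yrow.
  by case: (y == j); rewrite /= ?mul1r ?mulN1r.
rewrite (@L1 _ _ y) => [|j]; last by rewrite mxE eqxx.
have -> : row' y (col' y (\matrix_(i, j) (if i == y then (y == j)%:R else A i j)))
    = Zm (f \o lift y) - const_mx 1.
  by apply/matrixP => i j; rewrite !mxE [lift y i == y]eq_sym (negbTE (neq_lift y i)).
have [-> _] := IH _ (inj_comp inj (@lift_inj _ y)).
rewrite img_lift //.
rewrite -(@rowop _ _ y (fun i => if i == y then 0 else 1)) ?eqxx //.
have -> : \matrix_(i, j) ((\matrix_(i0, j0) (if i0 == y then 1 else A i0 j0)) i j +
     (if i == y then 0 else 1) * (\matrix_(i0, j0) (if i0 == y then 1 else A i0 j0)) y j)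
   = cmat f y.
  apply/matrixP => i j; rewrite !mxE eqxx; case: (i == y); first by rewrite mul0r addr0.
  by rewrite mul1r subrK.
rewrite (cpart y) (psi_split (imgf y)).
have -> : [set z in img f | plt (f y) z] = set0.
  apply/setP => z; rewrite !inE; apply/negP => /andP[/existsP[i /eqP ez] yz].
  move: yz; rewrite -ez => yz; have ei := ymax _ (plt_ple yz).
  by move: yz; rewrite ei plt_irr.
by rewrite psi0 mulr1 mul1r mulN1r.
Qed.

Lemma det_XM n (f : 'I_n -> X) : injective f -> \det (XM f) = (-1) ^+ n * psi (img f).
Proof.
move=> inj.
have -> : XM f = (-1) *: (Zm f - const_mx 1).
  apply/matrixP => i j; rewrite !mxE.
  by case: ple; rewrite /= ?subrr ?mulr0 ?sub0r ?mulN1r ?opprK.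
by rewrite detZ (proj1 (det_main inj)).
Qed.

Definition good (A : {set X}) (h : X -> X) : Prop :=
  (forall a, a \in A -> h a \in A) /\
  (forall a b, a \in A -> b \in A -> ple a b -> ple (h a) (h b)).
Definition stepA (A : {set X}) (h g : X -> X) : Prop :=
  good A h /\ good A g /\ forall a, a \in A -> ple (h a) (g a).
Definition crst A := clos_refl_sym_trans (X -> X) (stepA A).

Definition dbeat (A : {set X}) b := b \in A /\ exists m, m \in A /\ plt m b /\
  forall y, y \in A -> plt y b -> ple y m.
Definition ubeat (A : {set X}) b := b \in A /\ exists m, m \in A /\ plt b m /\
  forall y, y \in A -> plt b y -> ple m y.

Lemma psi_dbeat A b : dbeat A b -> psi A = psi (A :\ b).
Proof.
case=> bA [m [mA [mb mmax]]].
rewrite (psi_split bA) [psi [set y in A | plt y b]](@psi_max _ m) ?mul0r ?subr0 //.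
  by rewrite inE mA mb.
by move=> y; rewrite inE => /andP[yA yb]; exact: mmax.
Qed.

Lemma psi_ubeat A b : ubeat A b -> psi A = psi (A :\ b).
Proof.
case=> bA [m [mA [mb mmin]]].
rewrite (psi_split bA) [psi [set y in A | plt b y]](@psi_min _ m) ?mulr0 ?subr0 //.
  by rewrite inE mA mb.
by move=> y; rewrite inE => /andP[yA yb]; exact: mmin.
Qed.

Lemma down_lt (y a : X) : plt y a -> (#|[set z | ple z y]| < #|[set z | ple z a]|)%N.
Proof.
move=> ya; apply: proper_card; apply/properP; split.
  by apply/subsetP => z; rewrite !inE => /ple_trans; apply; exact: plt_ple.
exists a; rewrite !inE ?ple_refl //; apply/negP => ay.
by apply: (plt_anti ya); rewrite /plt eq_sym (andP ya).1.
Qed.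

Lemma up_lt (a y : X) : plt a y -> (#|[set z | ple y z]| < #|[set z | ple a z]|)%N.
Proof.
move=> ay; apply: proper_card; apply/properP; split.
  by apply/subsetP => z; rewrite !inE; apply: ple_trans; exact: plt_ple.
exists a; rewrite !inE ?ple_refl //; apply/negP => ya.
by apply: (plt_anti ay); rewrite /plt eq_sym (andP ay).1.
Qed.

Lemma stong_down A g : good A g -> (forall a, a \in A -> ple (g a) a) ->
  (forall b, ~ dbeat A b) -> forall a, a \in A -> g a = a.
Proof.
case=> gA gmon gle nob.
suff H : forall k a, a \in A -> (#|[set z | ple z a]| <= k)%N -> g a = a.
  by move=> a aA; exact: (H _ a aA (leqnn _)).
elim=> [|k IH] a aA.
  by rewrite leqn0 => /eqP/cards0_eq/setP/(_ a); rewrite !inE ple_refl.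
move=> ca.
case: (eqVneq (g a) a) => // ne; exfalso; apply: (nob a); split => //.
exists (g a); split; first exact: gA.
split; first by rewrite /plt ne gle.
move=> y yA ya.
rewrite -{1}(IH y yA); last by rewrite -ltnS (leq_trans (down_lt ya)).
by apply: gmon => //; exact: plt_ple.
Qed.

Lemma stong_up A g : good A g -> (forall a, a \in A -> ple a (g a)) ->
  (forall b, ~ ubeat A b) -> forall a, a \in A -> g a = a.
Proof.
case=> gA gmon gle nob.
suff H : forall k a, a \in A -> (#|[set z | ple a z]| <= k)%N -> g a = a.
  by move=> a aA; exact: (H _ a aA (leqnn _)).
elim=> [|k IH] a aA.
  by rewrite leqn0 => /eqP/cards0_eq/setP/(_ a); rewrite !inE ple_refl.
move=> ca.
case: (eqVneq (g a) a) => // ne; exfalso; apply: (nob a); split => //.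
exists (g a); split; first exact: gA.
split; first by rewrite /plt eq_sym ne gle.
move=> y yA ay.
rewrite -{1}(IH y yA); last by rewrite -ltnS (leq_trans (up_lt ay)).
by apply: gmon => //; exact: plt_ple.
Qed.

Lemma fence_map (A A' : {set X}) (r : X -> X) :
  (forall a, a \in A' -> a \in A) -> (forall a, a \in A -> r a \in A') ->
  (forall a b, a \in A -> b \in A -> ple a b -> ple (r a) (r b)) ->
  forall h g, crst A h g -> crst A' (r \o h) (r \o g).
Proof.
move=> sub rA rmon h g; elim=> {h g}.
- move=> h g [[hA hmon] [[gA gmon] hg]]; apply: rst_step; split; last split.
  + split=> [a /sub aA|a b /sub aA /sub bA ab]; first exact: rA (hA _ aA).
    by apply: rmon; [exact: hA|exact: hA|exact: hmon].
  + split=> [a /sub aA|a b /sub aA /sub bA ab]; first exact: rA (gA _ aA).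
    by apply: rmon; [exact: gA|exact: gA|exact: gmon].
  + by move=> a /sub aA; apply: rmon; [exact: hA|exact: gA|exact: hg].
- by move=> h; exact: rst_refl.
- by move=> h g _ IH; exact: rst_sym.
- by move=> h g k _ IH1 _ IH2; exact: rst_trans IH1 IH2.
Qed.

Lemma fence_id A : (forall b, ~ dbeat A b) -> (forall b, ~ ubeat A b) ->
  forall h g, crst A h g -> ((forall a, a \in A -> h a = a) <-> (forall a, a \in A -> g a = a)).
Proof.
move=> nd nu h g; elim=> {h g}.
- move=> h g [gh [gg hg]]; split=> H.
    apply: stong_up => // a aA; rewrite -{1}(H a aA); exact: hg.
  apply: stong_down => // a aA; rewrite -{2}(H a aA); exact: hg.
- by [].
- by move=> h g _ [H1 H2]; split.
- by move=> h g k _ [H1 H2] _ [H3 H4]; split => H; auto.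
Qed.

Lemma fence_psi : forall k (A : {set X}) c, (#|A| <= k)%N -> c \in A ->
  crst A id (fun _ => c) -> psi A = 0.
Proof.
elim=> [|k IH] A c.
  by rewrite leqn0 => /eqP/cards0_eq ->; rewrite inE.
move=> cardA cA fence.
case: (classic (exists b, dbeat A b \/ ubeat A b)) => [[b Hb]|nob]; last first.
  have nd b : ~ dbeat A b by move=> H; apply: nob; exists b; left.
  have nu b : ~ ubeat A b by move=> H; apply: nob; exists b; right.
  have Hc := (fence_id nd nu fence).1 (fun a _ => erefl).
  have -> : A = [set c].
    apply/setP => z; rewrite inE; apply/idP/eqP => [zA|->//].
    by rewrite -(Hc z zA).
  exact: psi1.
have bA : b \in A by case: Hb => [[]|[]].
have cardA' : (#|A :\ b| <= k)%N.
  by move: cardA; rewrite (cardsD1 b A) bA add1n ltnS.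
have subA : forall a, a \in A :\ b -> a \in A by move=> a; rewrite inE => /andP[].
case: Hb => [db|ub].
  rewrite (psi_dbeat db).
  case: db => _ [m [mA [mb mmax]]].
  pose r := fun z => if z == b then m else z.
  have rA : forall a, a \in A -> r a \in A :\ b.
    move=> a aA; rewrite /r !inE; case: (eqVneq a b) => [_|ab] /=; last by rewrite ?ab aA.
    by rewrite mA andbT; case/andP: mb.
  have rmon : forall a1 a2, a1 \in A -> a2 \in A -> ple a1 a2 -> ple (r a1) (r a2).
    move=> x1 x2 h1 h2 h12; rewrite /r.
    case: (eqVneq x1 b) => [eab|nab]; case: (eqVneq x2 b) => [eb2|nb2] /=.
    - exact: ple_refl.
    - by apply: ple_trans (plt_ple mb) _; rewrite -eab.
    - by apply: mmax => //; rewrite /plt nab -eb2.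
    - exact: h12.
  apply: (IH _ (r c)) => //; first exact: rA.
  apply: rst_trans (fence_map subA rA rmon fence).
  apply: rst_sym; apply: rst_step; split; last split.
  - split=> [a /subA aA|x1 x2 /subA h1 /subA h2 h12]; [exact: rA|exact: rmon].
  - by split=> // x1 x2 _ _.
  - move=> a; rewrite !inE => /andP[ab _]; rewrite /= /r (negbTE ab); exact: ple_refl.
rewrite (psi_ubeat ub).
case: ub => _ [m [mA [mb mmin]]].
pose r := fun z => if z == b then m else z.
have rA : forall a, a \in A -> r a \in A :\ b.
  move=> a aA; rewrite /r !inE; case: (eqVneq a b) => [_|ab] /=; last by rewrite ?ab aA.
  by rewrite mA andbT eq_sym; case/andP: mb.
have rmon : forall a1 a2, a1 \in A -> a2 \in A -> ple a1 a2 -> ple (r a1) (r a2).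
  move=> x1 x2 h1 h2 h12; rewrite /r.
  case: (eqVneq x1 b) => [eab|nab]; case: (eqVneq x2 b) => [eb2|nb2] /=.
  - exact: ple_refl.
  - by apply: mmin => //; rewrite /plt eq_sym nb2 -eab.
  - by apply: ple_trans (plt_ple mb); rewrite -eb2.
  - exact: h12.
apply: (IH _ (r c)) => //; first exact: rA.
apply: rst_trans (fence_map subA rA rmon fence).
apply: rst_sym; apply: rst_step; split; last split.
- split=> [a /subA aA|x1 x2 /subA h1 /subA h2 h12]; [exact: rA|exact: rmon].
- by split=> // x1 x2 _ _.
- move=> a; rewrite !inE => /andP[ab _]; rewrite /= /r (negbTE ab); exact: ple_refl.
Qed.

Lemma contr_fence A : contractible A -> exists c, c \in A /\ crst A id (fun _ => c).
Proof.
case=> c [cA [H [Hin [H0 [H1 Hc]]]]]; exists c; split => //.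
have goodt t : Rle R0 t -> Rle t R1 -> good A (fun x => H x t).
  move=> t0 t1; split=> [a aA|a b aA bA ab]; first exact: Hin.
  have [e [e0 He]] := Hc (H b t) b t (Hin b t bA t0 t1) bA t0 t1 (ple_refl _).
  apply: (He a t aA ab t0 t1).
  by rewrite Rminus_eq_0 Rabs_R0.
have loc : forall t, Rle R0 t -> Rle t R1 -> exists e, Rlt R0 e /\
    forall s, Rle R0 s -> Rle s R1 -> Rlt (Rabs (Rminus s t)) e ->
      stepA A (fun x => H x s) (fun x => H x t).
  move=> t t0 t1.
  case: (@fin_eps X t
      (fun x s => Rle R0 s -> Rle s R1 -> ple (H x s) (H x t)) (enum A)) => [x|e [e0 He]].
    rewrite mem_enum => xA.
    have [e [e0 He]] := Hc (H x t) x t (Hin x t xA t0 t1) xA t0 t1 (ple_refl _).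
    by exists e; split => // s hs s0 s1; exact: (He x s xA (ple_refl _) s0 s1 hs).
  exists e; split; first exact: e0.
  move=> s s0 s1 hs; split; first exact: goodt.
  split; first exact: goodt.
  by move=> a aA; apply: He => //; rewrite mem_enum.
have ch := @interval_chain (X -> X) (stepA A) (fun t x => H x t) loc.
have id0 : crst A id (fun x => H x R0).
  apply: rst_sym; apply: rst_step; split; [exact: goodt (Rle_refl _) Rle_0_1|split].
    by split=> // a b _ _.
  by move=> a aA; rewrite H0 //; exact: ple_refl.
have c1 : crst A (fun x => H x R1) (fun _ => c).
  apply: rst_step; split; [exact: goodt Rle_0_1 (Rle_refl _)|split].
    by split=> // a b _ _ _; exact: ple_refl.
  by move=> a aA; rewrite H1 //; exact: ple_refl.
rewrite /crst in id0 c1 *.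
apply: rst_trans id0 _; apply: rst_trans _ c1; exact: ch.
Qed.

Lemma psi_contr A : contractible A -> psi A = 0.
Proof. by case/contr_fence => c [cA f]; exact: (fence_psi (leqnn _) cA f). Qed.

End Psi.

Lemma PhiE (X : FinT0) n (f : 'I_n -> X) : bijective f ->
  `|\det (XM f)| = `|psi (setT : {set X})|.
Proof.
move=> bf; rewrite det_XM ?normrM ?normr_sign ?mul1r; last exact: bij_inj.
congr (`|psi _|); apply/setP => z; rewrite !inE.
by case: bf => g fg gf; apply/existsP; exists (g z); rewrite gf.
Qed.

Lemma XM_comp (X Y : FinT0) n (f : 'I_n -> Y) (g : Y -> X) :
  (forall a b, ple (g a) (g b) = ple a b) -> XM (g \o f) = XM f.
Proof. by move=> H; apply/matrixP => i j; rewrite !mxE /= H. Qed.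

Lemma img_emb (X Y : FinT0) (x : X) (g : Y -> X) n (f : 'I_n -> Y) :
  bijective f -> (forall z, z != x <-> exists y, g y = z) -> img (g \o f) = setT :\ x.
Proof.
case=> f' ff' f'f gim; apply/setP => z; rewrite !inE andbT; apply/existsP/idP.
  by case=> i /eqP <-; apply/(proj2 (gim _)); exists (f i).
move=> zx; have [y gy] := (proj1 (gim z)) zx.
by exists (f' y); rewrite /= f'f gy.
Qed.

Lemma step_inv (X Y : FinT0) : she_step X Y ->
  `|psi (setT : {set X})| = `|psi (setT : {set Y})|.
Proof.
rewrite /she_step /homeomorphic /wbp_removal.
case=> [[h [bh hple]]|[x [wbp [g [ginj [gim gple]]]]]].
  rewrite -(PhiE (@enum_val_bij X)) -(PhiE (bij_comp bh (@enum_val_bij X))).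
  by rewrite XM_comp.
rewrite -(PhiE (@enum_val_bij Y)) -(XM_comp _ gple) det_XM; last first.
  exact: inj_comp ginj (bij_inj (@enum_val_bij Y)).
rewrite normrM normr_sign mul1r.
rewrite (img_emb (@enum_val_bij Y) gim).
rewrite (psi_split (in_setT x)).
have -> : [set y in setT | plt y x] = [set y | plt y x] by apply/setP => y; rewrite !inE.
have -> : [set y in setT | plt x y] = [set y | plt x y] by apply/setP => y; rewrite !inE.
by case: wbp => /psi_contr ->; rewrite ?mul0r ?mulr0 subr0.
Qed.

Unset Implicit Arguments.
Set Strict Implicit.

Theorem mainTheorem6 (X Y : FinT0) (n m : nat) (fX : 'I_n -> X) (fY : 'I_m -> Y) :
  bijective fX -> bijective fY ->
  simple_homotopy_equivalent X Y ->
  `|\det (XM fX)| = `|\det (XM fY)|.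
Proof.
move=> bX bY she; rewrite (PhiE bX) (PhiE bY).
elim: she => {X Y fX fY bX bY}.
- by move=> X Y; exact: step_inv.
- by [].
- by move=> X Y _ ->.
- by move=> X Y Z _ -> _ ->.
Qed.
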